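(* Let $k,m,n,l$ be positive integers with $nl+ml\le k$ and let $q$ be a prime power. Let $\mathbb{L}$ be the set of $l$-dimensional subspaces of $\mathbb{F}_q^k$ and define $\mathbb{X}=\{\{L_1,\dots,L_n\}\subseteq\mathbb{L}: \dim(L_1+\cdots+L_n)=nl\}$, $\mathbb{Y}=\{\{L_1,\dots,L_m\}\subseteq\mathbb{L}: \dim(L_1+\cdots+L_m)=ml\}$, $\mathbb{Z}=\{\{L_1,\dots,L_{n+m}\}\subseteq\mathbb{L}: \dim(L_1+\cdots+L_{n+m})=(n+m)l\}$. Let $B$ be the bipartite graph with left (user) vertex set $\mathbb{X}$, right (subfile) vertex set $\mathbb{Y}$, and $X$ adjacent to $Y$ iff $X\cup Y\in\mathbb{Z}$. Put $P=\prod_{i=0}^{l-1}\binom{l-i}{1}_q$. Then $B$ is a $(K,F,D)$ bipartite caching graph with $$K=\frac{(l!)^n q^{\frac{n(n-1)l^2}{2}}}{(nl)!\,n!}\cdot\frac{\prod_{i=0}^{nl-1}\binom{k-i}{1}_q}{P^n}\prod_{i=0}^{n-1}\binom{(n-i)l}{l},\qquad F=\frac{(l!)^m q^{\frac{m(m-1)l^2}{2}}}{(ml)!\,m!}\cdot\frac{\prod_{i=0}^{ml-1}\binom{k-i}{1}_q}{P^m}\prod_{i=0}^{m-1}\binom{(m-i)l}{l},$$ admitting an induced matching cover with $$S=\frac{(l!)^{n+m}q^{\frac{(n+m)(n+m-1)l^2}{2}}}{((n+m)l)!\,(n+m)!}\cdot\frac{\prod_{i=0}^{(n+m)l-1}\binom{k-i}{1}_q}{P^{n+m}}\prod_{i=0}^{n+m-1}\binom{(n+m-i)l}{l}$$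 induced matchings, each having $g=\binom{n+m}{n}$ edges; it defines a coded caching scheme (for $N\ge K$ files) with $K$ users, subpacketization $F$, $$\frac{M}{N}=1-q^{mnl^2}\prod_{i=0}^{ml-1}\frac{\binom{k-nl-i}{1}_q}{\binom{k-i}{1}_q},$$ rate $R=S/F$ and global caching gain $\gamma=g$.
   Context: $\binom{a}{1}_q=\frac{q^a-1}{q-1}$; other binomial coefficients $\binom{a}{b}$ are ordinary. Coded caching setup: a server holds $N$ files and is connected by an error-free broadcast link to $K$ users, each with a cache able to store $M$ files; assumed $N\ge K$. Each file is split into $F$ equal-size subfiles indexed by $\mathcal{F}$. Caching is symmetric: each user caches, for each index $f$, the $f$-th subfile of either all files or none. In the delivery phase each user demands one file and the server broadcasts subfile-size transmissions allowing every user to recover its demand, for every demand vector. Rate $R=(\text{number of transmissions})/F$; global caching gain $\gamma=K(1-M/N)/R$. A $(K,F,D)$ bipartite caching graph is a bipartite graph with $K$ left (user) vertices and $F$ right (subfile) vertices, every left vertex of degree $D$; it defines the symmetric caching scheme in which user $k$ does not cache subfile index $f$ exactly when $\{k,f\}$ is an edge (so $M/N=1-D/F$). An induced matching of $B$ is a set $\mathcal{C}\subseteq E(B)$ such that for any two distinct $\{k_1,f_1\},\{k_2,f_2\}\in\mathcal{C}$: $k_1\ne k_2$, $f_1\ne f_2$, $\{k_1,f_2\},\{k_2,f_1\}\notin E(B)$. An induced matching cover is a set of induced matchings partitioning $E(B)$. *)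

(* Defs.v *)
From HB Require Import structures.
From mathcomp Require Import all_boot all_order all_algebra all_field.
Set Implicit Arguments. Unset Strict Implicit. Unset Printing Implicit Defensive.
Import Order.TTheory GRing.Theory Num.Theory.

(* Finite-type structure on subspaces of a vector space over a finite field
   (the library provides only the subType structure, internally). *)
Module VsFin.
Import VectorInternalTheory.
HB.instance Definition _ (F : finFieldType) (vT : vectType F) :=
  [Finite of {vspace vT} by <:].
End VsFin.
HB.export VsFin.

Local Open Scope ring_scope.

Definition qbin1 (q a : nat) : rat := ((q%:Q) ^+ a - 1) / (q%:Q - 1).

Definition Pq (q l : nat) : rat := \prod_(i < l) qbin1 q (l - i).

(* The common counting expression appearing in K (with t = n), F (t = m),
   S (t = n + m):
   (l!)^t q^{t(t-1)l^2/2} / ((tl)! t!) * prod_{i<tl}[k-i]_q / P^t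
     * prod_{i<t} C((t-i)l, l). *)
Definition count_expr (q k t l : nat) : rat :=
  ((l`!)%:Q ^+ t * (q%:Q) ^+ ((t * (t - 1) * l ^ 2) %/ 2))
    / ((t * l)`!%:Q * (t`!)%:Q)
  * ((\prod_(i < t * l) qbin1 q (k - i)) / Pq q l ^+ t)
  * \prod_(i < t) ('C((t - i) * l, l))%:Q.

Definition MN_expr (q k n m l : nat) : rat :=
  1 - (q%:Q) ^+ (m * n * l ^ 2)
      * \prod_(i < m * l) (qbin1 q (k - n * l - i) / qbin1 q (k - i)).

Section Grass.
Variables (F : finFieldType) (k : nat).

Definition indep_family (l t : nat) : {set {set {vspace 'rV[F]_k}}} :=
  [set A : {set {vspace 'rV[F]_k}} |
     [&& #|A| == t, [forall L in A, \dim L == l]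
       & \dim (\sum_(L in A) L)%VS == t * l]].
End Grass.

Section Bip.
Variables (U V : finType) (Lv : {set U}) (Rv : {set V}) (adj : U -> V -> bool).

Definition bip_edges : {set U * V} :=
  [set e | [&& e.1 \in Lv, e.2 \in Rv & adj e.1 e.2]].

Definition bip_deg (x : U) : nat := #|[set y in Rv | adj x y]|.

Definition induced_matching (C : {set U * V}) : bool :=
  (C \subset bip_edges) &&
  [forall e1 in C, forall e2 in C, (e1 != e2) ==>
     [&& e1.1 != e2.1, e1.2 != e2.2,
         (e1.1, e2.2) \notin bip_edges & (e2.1, e1.2) \notin bip_edges]].

Definition induced_matching_cover (P : {set {set U * V}}) : bool :=
  partition P bip_edges && [forall C in P, induced_matching C].
End Bip.

(* Main.v *)
Require Import Defs.
From HB Require Import structures.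
From mathcomp Require Import all_boot all_order all_algebra all_field.
From mathcomp Require Import zify ring lra.
Import Order.TTheory GRing.Theory Num.Theory.
Set Implicit Arguments. Unset Strict Implicit. Unset Printing Implicit Defensive.

Section VS.
Variables (F : finFieldType) (k : nat).
Local Notation V := 'rV[F]_k.
Local Notation Vs := {vspace V}.
Local Notation q := #|F|.

Lemma dimfull : \dim (fullv : Vs) = k.
Proof. by rewrite dimvf dim_matrix /= mul1r. Qed.

Lemma dim_add_line (X : Vs) v : \dim (X + <[v]>)%VS = (\dim X + (v \notin X))%N.
Proof.
case: (boolP (v \in X)) => vX /=.
  by rewrite addn0; congr (\dim _); apply/addv_idPl; rewrite -memvE.
have v0 : v != 0%R by apply: contraNneq vX => ->; rewrite mem0v.
rewrite dimv_disjoint_sum ?dim_vline ?v0 //.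
apply/eqP; rewrite -subv0; apply/subvP => w; rewrite memv_cap => /andP[wX /vlineP[c wc]].
subst w; rewrite memv0; have [->|c0] := eqVneq c 0%R; first by rewrite scale0r.
case/negP: vX; have -> : v = (c^-1 *: (c *: v))%R by rewrite scalerA mulVf // scale1r.
by rewrite memvZ.
Qed.

Lemma direct_sub (W L L' : Vs) : \dim (W + L)%VS = (\dim W + \dim L)%N ->
  (L' <= L)%VS -> \dim (W + L')%VS = (\dim W + \dim L')%N.
Proof.
move=> h sL.
have h1 := dimv_sum_cap W L; have h2 := dimv_sum_cap W L'.
have h3 : \dim (W :&: L') <= \dim (W :&: L) by apply: dimvS; apply: capvS.
lia.
Qed.

Definition SA (A : {set Vs}) : Vs := (\sum_(L in A) L)%VS.

Lemma dimSA_le (A : {set Vs}) l : (forall L, L \in A -> \dim L = l) ->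
  \dim (SA A) <= #|A| * l.
Proof.
move=> h; apply: leq_trans (dimv_leq_sum _ _ _) _.
by rewrite (eq_bigr (fun _ => l)) ?sum_nat_const.
Qed.

Lemma SAU (A B : {set Vs}) : SA (A :|: B) = (SA A + SA B)%VS.
Proof.
apply/eqP; rewrite eqEsubv; apply/andP; split.
  apply/subv_sumP => L; rewrite inE => /orP[] LA.
    by apply: subv_trans (addvSl _ _); apply: sumv_sup LA _.
  by apply: subv_trans (addvSr _ _); apply: sumv_sup LA _.
rewrite subv_add; apply/andP; split; apply/subv_sumP => L LA;
  by apply: (sumv_sup L); rewrite ?inE ?LA ?orbT.
Qed.

Lemma SAD1 (A : {set Vs}) L : L \in A -> SA A = (L + SA (A :\ L))%VS.
Proof. by move=> LA; rewrite /SA (big_setD1 L LA). Qed.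

Lemma SAU1 (A : {set Vs}) L : L \notin A -> SA (L |: A) = (L + SA A)%VS.
Proof. by move=> LA; rewrite /SA (big_setU1 _ LA). Qed.

Lemma SA0 : SA set0 = 0%VS.
Proof. by rewrite /SA big_set0. Qed.


Lemma card_sum (T : finType) (C : {set T}) (f : T -> bool) :
  #|[set x in C | f x]| = \sum_(x in C) (f x : nat).
Proof.
rewrite -sum1_card [in LHS]big_mkcond [in RHS]big_mkcond /=.
by apply: eq_bigr => x _; rewrite !inE; case: (x \in C); case: (f x).
Qed.

Lemma dcount (T1 T2 : finType) (A : {set T1}) (B : {set T2}) (R : T1 -> T2 -> bool) :
  \sum_(a in A) #|[set b in B | R a b]| = \sum_(b in B) #|[set a in A | R a b]|.
Proof.
under eq_bigr do rewrite card_sum.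
under [RHS]eq_bigr do rewrite card_sum.
exact: exchange_big.
Qed.

Definition Bq (l : nat) := \prod_(j < l) (q ^ l - q ^ j).
Definition Nset (U W : Vs) l := [set L : Vs |
  [&& (L <= U)%VS, \dim L == l & \dim (W + L)%VS == \dim W + l]].

Lemma card_diff (U W : Vs) : (W <= U)%VS ->
  #|[set v | (v \in U) && (v \notin W)]| = q ^ \dim U - q ^ \dim W.
Proof.
move=> sWU.
have -> : [set v | (v \in U) && (v \notin W)] = [set v in U] :\: [set v in W].
  by apply/setP => v; rewrite !inE andbC.
rewrite cardsD.
have -> : [set v in U] :&: [set v in W] = [set v in W].
  apply/setP => v; rewrite !inE; apply/andb_idl => vW.
  exact: (subvP sWU).
by rewrite !cardsE !card_vspace.
Qed.

Lemma N0 (U W : Vs) : #|Nset U W 0| = 1.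
Proof.
rewrite (_ : Nset U W 0 = [set 0%VS]) ?cards1 //; apply/setP => L; rewrite !inE.
apply/idP/idP.
  by case/and3P => _; rewrite dimv_eq0.
by move/eqP => ->; rewrite sub0v dimv0 addv0 addn0 !eqxx.
Qed.

Lemma ext_char (U W L' L : Vs) l v : (L' <= U)%VS ->
  \dim L' = l -> \dim (W + L')%VS = (\dim W + l)%N ->
  L \in Nset U W l.+1 -> (L' <= L)%VS -> v \in L -> v \notin L' ->
  [/\ L = (L' + <[v]>)%VS, v \in U & v \notin (W + L')%VS].
Proof.
move=> sL'U dL' dWL'; rewrite inE => /and3P[sLU /eqP dL /eqP dWL] sL'L vL vL'.
have sub : (L' + <[v]> <= L)%VS by rewrite subv_add sL'L -memvE.
have dd : \dim (L' + <[v]>)%VS = l.+1 by rewrite dim_add_line vL' dL' addn1.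
have eqL : L = (L' + <[v]>)%VS.
  apply/esym/eqP; rewrite eqEdim sub dd dL leqnn //.
split => //; first exact: (subvP sLU).
apply/negP => vWL'.
have : \dim (W + L)%VS = \dim (W + L')%VS.
  rewrite eqL addvA; congr (\dim _); apply/addv_idPl; by rewrite -memvE.
rewrite dWL dWL'; lia.
Qed.

Lemma ext_mem (U W L' : Vs) l v : (W <= U)%VS -> (L' <= U)%VS ->
  \dim L' = l -> \dim (W + L')%VS = (\dim W + l)%N ->
  v \in U -> v \notin (W + L')%VS ->
  [/\ (L' + <[v]>)%VS \in Nset U W l.+1, (L' <= L' + <[v]>)%VS,
     v \in (L' + <[v]>)%VS & v \notin L'].
Proof.
move=> sWU sL'U dL' dWL' vU vWL'.
have vL' : v \notin L'.
  by apply: contra vWL'; apply: (subvP (addvSr _ _)).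
split => //; last 2 first.
- exact: addvSl.
- by rewrite memvE addvSr.
rewrite inE subv_add sL'U -memvE vU dim_add_line vL' dL' addn1 eqxx /=.
by rewrite addvA dim_add_line vWL' dWL' addn1 addnS.
Qed.

Lemma Nform l : forall U W : Vs, (W <= U)%VS ->
  #|Nset U W l| * Bq l = \prod_(j < l) (q ^ \dim U - q ^ (\dim W + j)).
Proof.
elim: l => [|l IH] U W sWU.
  by rewrite N0 /Bq !big_ord0.
set T := Nset U W l.+1; set Tl := Nset U W l.
have C1 : forall L, L \in T -> [set L' in Tl | (L' <= L)%VS] = Nset L 0 l.
  move=> L; rewrite !inE => /and3P[sLU /eqP dL /eqP dWL].
  apply/setP => L'; rewrite !inE dimv0 add0v add0n.
  apply/idP/idP.
    by case/andP=> /and3P[_ -> _] ->; rewrite andbT.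
  case/and3P=> sL'L /eqP dL' _.
  rewrite sL'L andbT (subv_trans sL'L sLU) dL' eqxx /=.
  by rewrite (direct_sub (L := L)) ?dL' // dWL dL.
have C2 : forall L', L' \in Tl ->
    #|[set L in T | (L' <= L)%VS]| * (q ^ l.+1 - q ^ l) = q ^ \dim U - q ^ (\dim W + l).
  move=> L'; rewrite inE => /and3P[sL'U /eqP dL' /eqP dWL'].
  set TL := [set L in T | (L' <= L)%VS].
  have E1 : \sum_(L in TL) #|[set v in [set: V] | (v \in L) && (v \notin L')]|
      = #|TL| * (q ^ l.+1 - q ^ l).
    rewrite -sum_nat_const; apply: eq_bigr => L; rewrite !inE => /andP[/and3P[_ /eqP dL _] sL'L].
    rewrite -dL -dL' -card_diff //; apply: eq_card => v; by rewrite !inE.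
  rewrite -E1 dcount.
  have sWL'U : (W + L' <= U)%VS by rewrite subv_add sWU sL'U.
  rewrite -dWL' -card_diff // -[in RHS](setTI [set v | _]) card_sum.
  apply: eq_bigr => v _; rewrite inE.
  case: (boolP ((v \in U) && (v \notin (W + L')%VS))) => /= hv.
    have [vU vWL'] := andP hv.
    have [h1 h2 h3 h4] := ext_mem sWU sL'U dL' dWL' vU vWL'.
    rewrite (_ : [set _ in _ | _] = [set (L' + <[v]>)%VS]) ?cards1 //; apply/setP => L; rewrite !inE.
    apply/idP/idP.
      case/andP=> /andP[LT sL'L] /andP[vL vnL'].
      have LT' : L \in Nset U W l.+1 by rewrite inE.
      by have [-> _ _] := ext_char sL'U dL' dWL' LT' sL'L vL vnL'.
    by move/eqP => ->; move: h1; rewrite inE => ->; rewrite h2 h3 h4.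
  apply/eqP; rewrite cards_eq0; apply/eqP/setP => L; rewrite !inE.
  apply/negP => /andP[/andP[LT sL'L] /andP[vL vnL']].
  have LT' : L \in Nset U W l.+1 by rewrite inE.
  have [_ vU vWL'] := ext_char sL'U dL' dWL' LT' sL'L vL vnL'.
  by rewrite vU vWL' in hv.
have S1 : \sum_(L in T) #|Nset L 0 l| = \sum_(L' in Tl) #|[set L in T | (L' <= L)%VS]|.
  rewrite -(dcount T Tl (fun L L' => (L' <= L)%VS)).
  by apply: eq_bigr => L h; rewrite C1.
have S2 : (\sum_(L in T) #|Nset L 0 l|) * Bq l = #|T| * \prod_(j < l) (q ^ l.+1 - q ^ j).
  rewrite big_distrl /= -sum_nat_const; apply: eq_bigr => L; rewrite inE => /and3P[_ /eqP dL _].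
  rewrite IH ?sub0v // dL dimv0; apply: eq_bigr => j _; by rewrite add0n.
have S3 : (\sum_(L' in Tl) #|[set L in T | (L' <= L)%VS]|) * (q ^ l.+1 - q ^ l)
    = #|Tl| * (q ^ \dim U - q ^ (\dim W + l)).
  rewrite big_distrl /= -sum_nat_const; apply: eq_bigr => L' h; exact: C2.
rewrite /Bq big_ord_recr /= [in RHS]big_ord_recr /= mulnA -S2 S1 mulnAC S3 mulnAC.
by rewrite -/(Bq l) IH.
Qed.


Definition Gs (W : Vs) (l t : nat) := [set A : {set Vs} |
  [&& #|A| == t, [forall L in A, \dim L == l] & \dim (W + SA A)%VS == \dim W + t * l]].

Lemma GsP (W : Vs) (l t : nat) (A : {set Vs}) : reflect
  [/\ #|A| = t, forall L, L \in A -> \dim L = l & \dim (W + SA A)%VS = \dim W + t * l]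
  (A \in Gs W l t).
Proof.
rewrite inE; apply: (iffP and3P) => [[/eqP h1 /forall_inP h2 /eqP h3]|[h1 h2 h3]].
  by split => // L /h2 /eqP.
by split; [apply/eqP | apply/forall_inP => L /h2 -> | apply/eqP].
Qed.

Lemma G0 (W : Vs) (l : nat) : #|Gs W l 0| = 1.
Proof.
rewrite (_ : Gs W l 0 = [set set0]) ?cards1 //; apply/setP => A; rewrite inE.
apply/GsP/eqP => [[/cards0_eq -> //]|->].
split; [by rewrite cards0 | by move=> L; rewrite inE | by rewrite SA0 addv0 addn0].
Qed.

Lemma L_in_N (W : Vs) (l t : nat) (A : {set Vs}) (L : Vs) : A \in Gs W l t.+1 -> L \in A -> L \in Nset fullv W l.
Proof.
case/GsP => cA dA dWA LA; rewrite inE subvf dA ?eqxx //=.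
have hA : forall L', L' \in A :\ L -> \dim L' = l by move=> L'; rewrite inE => /andP[_ /dA].
have h1 := dimSA_le hA.
have h2 : #|A :\ L| = t by move: (cardsD1 L A); rewrite LA cA => [[]].
move: dWA; rewrite (SAD1 LA) addvA => h.
have h3 := dimv_add_leqif (W + L) (SA (A :\ L)).
have h4 := dimv_add_leqif W L.
rewrite h2 in h1; rewrite (dA L LA) in h4.
apply/eqP; move: h3 h4 => [h3 _] [h4 _]; rewrite h in h3; rewrite mulSn in h3; lia.
Qed.

Lemma L_notin (W L : Vs) (l t : nat) (A' : {set Vs}) : 0 < l -> \dim (W + L)%VS = \dim W + l ->
  A' \in Gs (W + L) l t -> L \notin A'.
Proof.
move=> l0 dWL /GsP[cA dA dWA]; apply/negP => LA.
move: dWA; rewrite (SAD1 LA) addvA -(addvA W L L) addvv => h.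
have hA : forall L', L' \in A' :\ L -> \dim L' = l by move=> L'; rewrite inE => /andP[_ /dA].
have h1 := dimSA_le hA.
have h2 : #|A' :\ L| = t.-1 by move: (cardsD1 L A'); rewrite LA cA => ->.
have [h3 _] := dimv_add_leqif (W + L) (SA (A' :\ L)).
rewrite h in h3; rewrite h2 in h1.
have t0 : 0 < t by move: (cardsD1 L A'); rewrite LA cA; lia.
rewrite dWL in h3; move: h1 h3; case: t t0 {cA h2 h} => // t _ /=; rewrite mulSn; lia.
Qed.

Lemma Gs_split (W L : Vs) (l t : nat) : 0 < l -> L \in Nset fullv W l ->
  [set A in Gs W l t.+1 | L \in A] = (fun A' => L |: A') @: Gs (W + L) l t.
Proof.
move=> l0; rewrite inE => /and3P[_ /eqP dL /eqP dWL].
apply/setP => A; rewrite inE; apply/idP/imsetP.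
  case/andP => /GsP[cA dA dWA] LA; exists (A :\ L); last by rewrite setD1K.
  apply/GsP; split.
  - by move: (cardsD1 L A); rewrite LA cA => [[]].
  - by move=> L'; rewrite inE => /andP[_ /dA].
  by move: dWA; rewrite (SAD1 LA) addvA => ->; rewrite dWL mulSn addnA.
case=> A' A'G ->; have LA' := L_notin l0 dWL A'G.
case/GsP: A'G => cA dA dWA.
rewrite setU11 andbT; apply/GsP; split.
- by rewrite cardsU1 LA' cA.
- by move=> L'; rewrite in_setU1 => /orP[/eqP ->|/dA].
by rewrite SAU1 // addvA dWA dWL mulSn addnA.
Qed.

Lemma Gform (l t : nat) : 0 < l -> forall W : Vs,
  #|Gs W l t| * t`! * Bq l ^ t = \prod_(j < t * l) (q ^ k - q ^ (\dim W + j)).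
Proof.
move=> l0; elim: t => [|t IH] W.
  by rewrite G0 mul0n big_ord0.
set G1 := Gs W l t.+1; set NL := Nset fullv W l.
have E : #|G1| * t.+1 = \sum_(L in NL) #|Gs (W + L) l t|.
  have -> : #|G1| * t.+1 = \sum_(A in G1) #|[set L in NL | L \in A]|.
    rewrite -sum_nat_const; apply: eq_bigr => A AG.
    have [cA _ _] := GsP _ _ _ _ AG.
    rewrite -cA; apply: eq_card => L; rewrite inE andb_idl // => LA.
    exact: L_in_N AG LA.
  rewrite (dcount G1 NL (fun A L => L \in A)); apply: eq_bigr => L LN.
  have dWL : \dim (W + L)%VS = \dim W + l by move: LN; rewrite inE => /and3P[_ _ /eqP].
  rewrite Gs_split // card_in_imset // => A1 A2 h1 h2 /= e.
  by rewrite -(setU1K (L_notin l0 dWL h1)) e setU1K // (L_notin l0 dWL h2).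
rewrite factS expnS (mulnA #|G1|) E.
have -> : (\sum_(L in NL) #|Gs (W + L) l t|) * t`! * (Bq l * Bq l ^ t)
   = \sum_(L in NL) (\prod_(j < t * l) (q ^ k - q ^ (\dim W + l + j))) * Bq l.
  rewrite !big_distrl /=; apply: eq_bigr => L; rewrite inE => /and3P[_ _ /eqP dWL].
  by rewrite (mulnC (Bq l)) mulnA IH dWL.
rewrite sum_nat_const (mulnC _ (Bq l)) mulnA.
have := Nform l (subvf W); rewrite dimfull -/NL => ->.
rewrite mulSn big_split_ord /=; congr (_ * _); apply: eq_bigr => j _.
by rewrite addnA.
Qed.


Lemma indepE (l t : nat) : indep_family F k l t = Gs 0%VS l t.
Proof. by apply/setP => A; rewrite !inE add0v dimv0 add0n. Qed.

Lemma setUDK' (T : finType) (X Z : {set T}) : X \subset Z -> X :|: (Z :\: X) = Z.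
Proof.
move/subsetP => h; apply/setP => x; rewrite !inE.
by case: (boolP (x \in X)) => //= /h ->.
Qed.

Lemma dimS_split (A B : {set Vs}) (a b l : nat) : #|A| = a -> #|B| = b ->
  (forall L, L \in A :|: B -> \dim L = l) -> \dim (SA (A :|: B)) = (a + b) * l ->
  \dim (SA A) = a * l /\ \dim (SA B) = b * l.
Proof.
move=> cA cB dL dU.
have hA : forall L, L \in A -> \dim L = l by move=> L LA; apply: dL; rewrite inE LA.
have hB : forall L, L \in B -> \dim L = l by move=> L LA; apply: dL; rewrite inE LA orbT.
have h1 := dimSA_le hA; have h2 := dimSA_le hB.
have [h3 _] := dimv_add_leqif (SA A) (SA B).
rewrite -SAU dU mulnDl in h3; rewrite cA in h1; rewrite cB in h2; lia.
Qed.

Lemma sub_indep (l n m : nat) (Z X : {set Vs}) : Z \in Gs 0%VS l (n + m) ->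
  X \subset Z -> #|X| = n -> X \in Gs 0%VS l n /\ Z :\: X \in Gs 0%VS l m.
Proof.
case/GsP => cZ dZ dSZ sXZ cX.
have cD : #|Z :\: X| = m by rewrite cardsD (setIidPr sXZ) cZ cX addKn.
have dU : forall L, L \in X :|: (Z :\: X) -> \dim L = l by rewrite setUDK'.
have dSU : \dim (SA (X :|: (Z :\: X))) = (n + m) * l.
  by rewrite setUDK' //; move: dSZ; rewrite add0v dimv0.
have [h1 h2] := dimS_split cX cD dU dSU.
split; apply/GsP; split => //; rewrite ?add0v ?dimv0 //.
- by move=> L LX; apply: dZ; apply: (subsetP sXZ).
- by move=> L; rewrite inE => /andP[_ /dZ].
Qed.

Lemma disj (l n m : nat) (X Y : {set Vs}) : X \in Gs 0%VS l n -> Y \in Gs 0%VS l m ->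
  X :|: Y \in Gs 0%VS l (n + m) -> X :&: Y = set0.
Proof.
case/GsP => cX _ _ /GsP[cY _ _] /GsP[cU _ _]; apply: cards0_eq.
move: (cardsU X Y) (subsetIl X Y); rewrite cU cX cY => h /subset_leq_card; lia.
Qed.

Lemma deg_eq (l n m : nat) (X : {set Vs}) : 0 < l -> X \in Gs 0%VS l n ->
  [set Y in Gs 0%VS l m | X :|: Y \in Gs 0%VS l (n + m)] = Gs (SA X) l m.
Proof.
move=> l0 /GsP[cX dX dSX]; rewrite add0v dimv0 add0n in dSX.
apply/setP => Y; rewrite inE; apply/andP/GsP.
  case=> /GsP[cY dY dSY] /GsP[cU dU dSU]; split => //.
  by move: dSU; rewrite add0v dimv0 add0n SAU => ->; rewrite dSX mulnDl.
case=> cY dY dSY.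
have [h3 _] := dimv_add_leqif (SA X) (SA Y).
have h1 := dimSA_le dY.
have dSY' : \dim (SA Y) = m * l by rewrite cY in h1; rewrite dSY dSX in h3; lia.
have dU : forall L, L \in X :|: Y -> \dim L = l by move=> L; rewrite inE => /orP[/dX|/dY].
have h4 := dimSA_le dU.
have cU : #|X :|: Y| = n + m.
  move: (cardsU X Y) h4; rewrite SAU dSY dSX cX cY -mulnDl leq_pmul2r // => h5 h6.
  have := subset_leq_card (subsetIl X Y); rewrite cX; lia.
split; apply/GsP; split => //; rewrite ?add0v ?dimv0 ?add0n //.
by rewrite SAU dSY dSX mulnDl.
Qed.

Definition CZ (n : nat) (Z : {set Vs}) : {set {set Vs} * {set Vs}} :=
  [set (X, Z :\: X) | X in [set X : {set Vs} | (X \subset Z) && (#|X| == n)]].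

Lemma CZ_card (n : nat) (Z : {set Vs}) : #|CZ n Z| = 'C(#|Z|, n).
Proof.
rewrite /CZ card_imset ?cards_draws // => X1 X2 /= e.
by move: (congr1 fst e).
Qed.

Lemma CZP (n : nat) (Z : {set Vs}) (e : {set Vs} * {set Vs}) : reflect [/\ e.1 \subset Z, #|e.1| = n & e.2 = Z :\: e.1] (e \in CZ n Z).
Proof.
apply: (iffP imsetP) => [[X] |[h1 h2 h3]].
  by rewrite inE => /andP[h1 /eqP h2] ->.
by exists e.1; [rewrite inE h1 h2 eqxx | case: e h3 {h1 h2} => /= ? ? ->].
Qed.

Lemma DD (T : finType) (X Z : {set T}) : X \subset Z -> Z :\: (Z :\: X) = X.
Proof. by move=> h; rewrite setDDr setDv set0U; apply/setIidPr. Qed.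


Lemma Gform0 (l t : nat) : 0 < l ->
  #|Gs 0%VS l t| * t`! * Bq l ^ t = \prod_(j < t * l) (q ^ k - q ^ j).
Proof. by move=> l0; rewrite Gform // dimv0. Qed.

Lemma CZ_Z (n : nat) (Z : {set Vs}) e : e \in CZ n Z -> e.1 :|: e.2 = Z.
Proof. by case/CZP => h1 _ ->; rewrite setUDK'. Qed.

Lemma CZ_ne (n : nat) (Z : {set Vs}) : #|Z| = n + (#|Z| - n) -> exists e, e \in CZ n Z.
Proof.
move=> h.
have : 0 < #|CZ n Z| by rewrite CZ_card bin_gt0 h leq_addr.
by rewrite card_gt0 => /set0Pn.
Qed.

Definition adjf (l n m : nat) := fun A B : {set Vs} => (A :|: B) \in Gs 0%VS l (n + m).
Definition edges (l n m : nat) := bip_edges (Gs 0%VS l n) (Gs 0%VS l m) (adjf l n m).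

Lemma edgeP (l n m : nat) e : reflect
  [/\ e.1 \in Gs 0%VS l n, e.2 \in Gs 0%VS l m & e.1 :|: e.2 \in Gs 0%VS l (n + m)]
  (e \in edges l n m).
Proof. by rewrite /edges /bip_edges [X in reflect _ X]inE; apply: (iffP and3P). Qed.

Lemma CZ_edge (l n m : nat) Z e : Z \in Gs 0%VS l (n + m) -> e \in CZ n Z -> e \in edges l n m.
Proof.
move=> hZ he; have eZ := CZ_Z he.
case/CZP: he => s1 c1 e2.
have [h1 h2] := sub_indep hZ s1 c1.
by apply/edgeP; split => //; [rewrite e2 | rewrite eZ].
Qed.

Lemma edge_CZ (l n m : nat) e : e \in edges l n m -> e \in CZ n (e.1 :|: e.2).
Proof.
case/edgeP => h1 h2 h3; have d := disj h1 h2 h3.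
have c1 : #|e.1| = n by case/GsP: h1.
apply/CZP; split => //; first exact: subsetUl.
rewrite setDUl setDv set0U; apply/esym/setDidPl.
by rewrite -setI_eq0 setIC d.
Qed.

Lemma eq_from_disj (T : finType) (X1 X2 Z : {set T}) : X1 \subset Z -> #|X2| <= #|X1| ->
  X1 :&: (Z :\: X2) = set0 -> X1 = X2.
Proof.
move=> s c d; apply/eqP; rewrite eqEcard c andbT; apply/subsetP => x x1.
apply/negPn/negP => x2.
have : x \in X1 :&: (Z :\: X2) by rewrite !inE x1 x2 (subsetP s).
by rewrite d inE.
Qed.

Lemma CZ_induced (l n m : nat) Z : Z \in Gs 0%VS l (n + m) ->
  induced_matching (Gs 0%VS l n) (Gs 0%VS l m) (adjf l n m) (CZ n Z).
Proof.
move=> hZ; apply/andP; split.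
  by apply/subsetP => e; apply: CZ_edge.
apply/forall_inP => e1 h1; apply/forall_inP => e2 h2; apply/implyP => ne.
have [s1 c1 d1] := CZP _ _ _ h1.
have [s2 c2 d2] := CZP _ _ _ h2.
have nX : e1.1 != e2.1.
  apply: contra ne => /eqP ee; apply/eqP.
  by rewrite [e1]surjective_pairing [e2]surjective_pairing d1 d2 ee.
apply/and4P; split => //.
- apply: contra nX => /eqP ee; apply/eqP.
  by rewrite -(DD s1) -d1 ee d2 DD.
- apply/negP => /edgeP[a1 a2 a3]; have d := disj a1 a2 a3.
  case/negP: nX; apply/eqP; apply: eq_from_disj s1 _ _; first by rewrite c1 c2.
  by rewrite -d2.
- apply/negP => /edgeP[a1 a2 a3]; have d := disj a1 a2 a3.
  case/negP: nX; apply/eqP/esym; apply: eq_from_disj s2 _ _; first by rewrite c1 c2.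
  by rewrite -d1.
Qed.

Lemma cover_part (l n m : nat) :
  induced_matching_cover (Gs 0%VS l n) (Gs 0%VS l m) (adjf l n m)
    [set CZ n Z | Z in Gs 0%VS l (n + m)].
Proof.
apply/andP; split; last first.
  by apply/forall_inP => C /imsetP[Z hZ ->]; apply: CZ_induced.
apply/and3P; split.
- apply/eqP/setP => e; apply/bigcupP/idP.
    by case=> C /imsetP[Z hZ ->]; apply: CZ_edge.
  move=> he; exists (CZ n (e.1 :|: e.2)); last exact: (edge_CZ (l := l) (m := m)).
  by apply: imset_f; case/(edgeP l n m e): he.
- apply/trivIsetP => C1 C2 /imsetP[Z1 hZ1 ->] /imsetP[Z2 hZ2 ->] ne.
  rewrite -setI_eq0; apply/negPn/negP => /set0Pn[e]; rewrite inE => /andP[h1 h2].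
  case/negP: ne.
  by rewrite -(CZ_Z h1) (CZ_Z h2).
apply/imsetP => [[Z hZ e]].
have [x hx] : exists e, e \in CZ n Z.
  by apply: CZ_ne; case/GsP: hZ => ->; rewrite addKn.
by rewrite -e inE in hx.
Qed.

Lemma card_P (l n m : nat) :
  #|[set CZ n Z | Z in Gs 0%VS l (n + m)]| = #|Gs 0%VS l (n + m)|.
Proof.
apply: card_in_imset => Z1 Z2 h1 h2 e.
have [x hx] : exists e, e \in CZ n Z1.
  by apply: CZ_ne; case/GsP: h1 => ->; rewrite addKn.
by rewrite -(CZ_Z hx); move: hx; rewrite e => /CZ_Z.
Qed.

End VS.
Lemma bin2D x : 'C(x, 2) * 2 = x * x.-1.
Proof.
elim: x => [|x IH] //; rewrite binS bin1 mulnDl IH; case: x {IH} => //= x; nia.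
Qed.

Lemma fact_prod (t l : nat) : l`! ^ t * \prod_(i < t) 'C((t - i) * l, l) = (t * l)`!.
Proof.
elim: t => [|t IH]; first by rewrite big_ord0.
rewrite big_ord_recl /= subn0 expnS.
rewrite (eq_bigr (fun i : 'I_t => 'C((t - i) * l, l))); last by move=> i _; rewrite /bump /= add1n subSS.
rewrite mulnCA -mulnA IH -(bin_fact (leq_addr (t * l) l)) mulSn addKn.
by rewrite mulnCA mulnA.
Qed.

Lemma exp_split (t l : nat) : 'C(t * l, 2) = t * 'C(l, 2) + (t * (t - 1) * l ^ 2) %/ 2.
Proof.
have e : t * (t - 1) * l ^ 2 = 'C(t, 2) * l ^ 2 * 2.
  by rewrite [RHS]mulnAC bin2D subn1.
rewrite e mulnK //.
have h1 := bin2D (t * l); have h2 := bin2D l; have h3 := bin2D t.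
apply/eqP; rewrite -(eqn_pmul2r (_ : 0 < 2)) // mulnDl h1.
have -> : t * 'C(l, 2) * 2 = t * (l * l.-1) by rewrite -mulnA h2.
have -> : 'C(t, 2) * l ^ 2 * 2 = t * t.-1 * l ^ 2 by rewrite mulnAC h3.
apply/eqP; case: t {e h1 h3} => [|t]; case: l {h2} => [|l] //=; rewrite ?muln0 //.
nia.
Qed.

Local Open Scope ring_scope.

Lemma prod_pow (q a b : nat) : (a <= b)%N -> (0 < q)%N ->
  ((\prod_(j < a) (q ^ b - q ^ j))%N)%:R =
  (q%:R : rat) ^+ 'C(a, 2) * \prod_(j < a) ((q%:R : rat) ^+ (b - j) - 1).
Proof.
move=> ab q0; rewrite natr_prod.
rewrite (eq_bigr (fun j : 'I_a => (q%:R : rat) ^+ j * ((q%:R : rat) ^+ (b - j) - 1))).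
  rewrite big_split /= prodrXr -bin2_sum big_mkord //.
move=> j _; rewrite natrB ?leq_pexp2l //; last by apply: ltnW; apply: leq_trans ab.
rewrite !natrX mulrBr mulr1 -exprD subnKC //; apply: ltnW; exact: leq_trans ab.
Qed.

Lemma Qpow_neq1 (q e : nat) : (1 < q)%N -> (0 < e)%N -> (q%:R : rat) ^+ e - 1 != 0.
Proof.
move=> q1 e0; rewrite subr_eq0 -natrX pnatr_eq1.
by rewrite -(expn0 q) eqn_exp2l // -lt0n.
Qed.

Lemma count_expr_eq (q k t l : nat) : (1 < q)%N -> (0 < t)%N -> (0 < l)%N -> (t * l <= k)%N ->
  count_expr q k t l * ((t`! * (\prod_(j < l) (q ^ l - q ^ j)) ^ t)%N)%:R
  = ((\prod_(j < t * l) (q ^ k - q ^ j))%N)%:R.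
Proof.
move=> q1 t0 l0 tlk.
have q0 : (0 < q)%N by apply: ltnW.
rewrite natrM natrX !prod_pow // (exp_split t l).
rewrite /count_expr /Pq /qbin1.
have E : forall x : nat, ((x%:Z)%:~R : rat) = x%:R by [].
rewrite !E.
set Q := (q%:R : rat).
have c0 : Q - 1 != 0 by have := Qpow_neq1 q1 (isT : (0 < 1)%N); rewrite expr1.
rewrite !prodf_div !prodr_const !card_ord.
have -> : \prod_(i < t) ('C((t - i) * l, l))%:R = (t * l)`!%:R / (l`! ^ t)%:R :> rat.
  rewrite -natr_prod -fact_prod natrM mulrC mulKf // pnatr_eq0 expn_eq0 negb_and.
  by rewrite -lt0n fact_gt0.
rewrite exprD (mulnC t 'C(l,2)) exprM.
set a := \prod_(i < t * l) (Q ^+ (k - i) - 1).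
have -> : \prod_(i < l) (Q ^+ (l - i) - 1) = \prod_(j < l) (Q ^+ (l - j) - 1) by [].
set b := \prod_(j < l) (Q ^+ (l - j) - 1).
have b0 : b != 0.
  rewrite prodf_seq_neq0; apply/allP => j _; apply/implyP => _.
  apply: Qpow_neq1 => //; rewrite subn_gt0; exact: ltn_ord.
have e1 : (Q - 1) ^+ t ^+ l = ((Q - 1) ^+ l) ^+ t by rewrite -!exprM mulnC.
have e2 : Q ^+ ('C(l, 2) * t) = (Q ^+ 'C(l,2)) ^+ t by rewrite exprM.
rewrite e1 e2 natrX expr_div_n exprMn.
have f0 : forall x, (x`!)%:R != 0 :> rat by move=> x; rewrite pnatr_eq0 -lt0n fact_gt0.
have Q0 : Q != 0 by rewrite pnatr_eq0 -lt0n.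
field.
by rewrite !expf_neq0 ?f0.
Qed.

Lemma MN_eq (q k n m l : nat) : (1 < q)%N -> (n * l + m * l <= k)%N ->
  ((\prod_(j < m * l) (q ^ k - q ^ (n * l + j)))%N)%:R
    / ((\prod_(j < m * l) (q ^ k - q ^ j))%N)%:R
  = (q%:R : rat) ^+ (m * n * l ^ 2)
    * \prod_(i < m * l) (qbin1 q (k - n * l - i) / qbin1 q (k - i)).
Proof.
move=> q1 hk.
have q0 : (0 < q)%N by apply: ltnW.
rewrite /qbin1.
have E : forall x : nat, ((x%:Z)%:~R : rat) = x%:R by [].
rewrite !E !natr_prod -prodf_div.
set Q := (q%:R : rat).
have c0 : Q - 1 != 0 by have := Qpow_neq1 q1 (isT : (0 < 1)%N); rewrite expr1.
have Q0 : Q != 0 by rewrite pnatr_eq0 -lt0n.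
have -> : Q ^+ (m * n * l ^ 2) = \prod_(i < m * l) Q ^+ (n * l).
  by rewrite prodr_const card_ord -exprM; congr (_ ^+ _); nia.
rewrite -big_split; apply: eq_bigr => j _ /=.
have hj : (n * l + j < k)%N by have := ltn_ord j; lia.
rewrite !natrB ?leq_exp2l //; try lia.
rewrite !natrX.
have e1 : Q ^+ k - Q ^+ (n * l + j) = Q ^+ (n * l) * Q ^+ j * (Q ^+ (k - n * l - j) - 1).
  rewrite mulrBr mulr1 -!exprD; congr (_ ^+ _ - _ ^+ _); lia.
have e2 : Q ^+ k - Q ^+ j = Q ^+ j * (Q ^+ (k - j) - 1).
  rewrite mulrBr mulr1 -!exprD; congr (_ ^+ _ - _); lia.
have d0 : Q ^+ (k - j) - 1 != 0 by apply: Qpow_neq1 => //; lia.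
rewrite e1 e2; field.
by rewrite c0 d0 expf_neq0.
Qed.

Unset Implicit Arguments.

Theorem theorem4 (F : finFieldType) (k m n l : nat) :
  (0 < k)%N -> (0 < m)%N -> (0 < n)%N -> (0 < l)%N ->
  (n * l + m * l <= k)%N ->
  let q := #|F| in
  let X := indep_family F k l n in
  let Y := indep_family F k l m in
  let Z := indep_family F k l (n + m) in
  let adj := fun A B : {set {vspace 'rV[F]_k}} => (A :|: B) \in Z in
  let K := #|X| in
  let Fs := #|Y| in
  let g := 'C(n + m, n) in
  [/\ K%:Q = count_expr q k n l,
      Fs%:Q = count_expr q k m l
    & exists D : nat,
      [/\ (* B is a (K, Fs, D) bipartite caching graph *)
          forall A, A \in X -> bip_deg Y adj A = D,
          (* M/N = 1 - D/F *)
          1 - D%:Q / Fs%:Q = MN_expr q k n m l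
        & exists P : {set {set {set {vspace 'rV[F]_k}} * {set {vspace 'rV[F]_k}}}},
          let S := #|P| in
          [/\ induced_matching_cover X Y adj P,
              S%:Q = count_expr q k (n + m) l,
              forall C, C \in P -> #|C| = g
            & (* gamma = K (1 - M/N) / R with R = S / F *)
              K%:Q * (1 - (1 - D%:Q / Fs%:Q)) / (S%:Q / Fs%:Q) = g%:Q]]].
Proof.
move=> k0 m0 n0 l0 hk q X Y Z adj K Fs g.
have q1 : (1 < q)%N by apply: finNzRing_gt1.
have E : forall x : nat, ((x%:Z)%:~R : rat) = x%:R by [].
rewrite /K /Fs /g /X /Y /Z /adj /q !indepE !E.
set B := Bq F l.
have Bpos : (0 < B)%N.
  by rewrite prodn_gt0 // => j; rewrite subn_gt0 ltn_exp2l.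
have Ppos : forall t, (t * l <= k)%N -> (0 < \prod_(j < t * l) (#|F| ^ k - #|F| ^ j))%N.
  move=> t h; rewrite prodn_gt0 // => j; rewrite subn_gt0 ltn_exp2l //.
  exact: leq_trans (ltn_ord j) h.
have cnt : forall t, (0 < t)%N -> (t * l <= k)%N ->
    (#|Gs (k := k) (F := F) 0%VS l t|)%:R = count_expr #|F| k t l.
  move=> t t0 tk; have h := count_expr_eq q1 t0 l0 tk.
  have c0 : ((t`! * B ^ t)%N)%:R != 0 :> rat.
    by rewrite pnatr_eq0 -lt0n muln_gt0 fact_gt0 expn_gt0 Bpos.
  apply: (mulIf c0); rewrite h -natrM mulnA (@Gform0 F k l t l0).
  by [].
have nk : (n * l <= k)%N by lia.
have mk : (m * l <= k)%N by lia.
have nmk : ((n + m) * l <= k)%N by rewrite mulnDl.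
have [A0 hA0] : exists A0, A0 \in Gs (k := k) (F := F) 0%VS l n.
  apply/set0Pn; rewrite -card_gt0.
  have := Ppos n nk; rewrite -(@Gform0 F k l n l0) !muln_gt0; by case/andP => /andP[].
set P2 := (\prod_(j < m * l) (#|F| ^ k - #|F| ^ (n * l + j)))%N.
have dSA : forall A, A \in Gs (k := k) (F := F) 0%VS l n -> \dim (SA A) = n * l.
  by move=> A /GsP[_ _]; rewrite add0v dimv0 add0n.
have HA : forall A, A \in Gs (k := k) (F := F) 0%VS l n ->
    (#|Gs (SA A) l m| * m`! * B ^ m)%N = P2.
  by move=> A hA; rewrite (@Gform F k l m l0) dSA.
set D := #|Gs (SA A0) l m|.
have HDc : (D * m`! * B ^ m)%N = P2 by apply: HA.
have cm : (0 < m`! * B ^ m)%N by rewrite muln_gt0 fact_gt0 expn_gt0 Bpos.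
have HF := @Gform0 F k l m l0.
have Fpos : (0 < #|Gs (k := k) (F := F) 0%VS l m|)%N.
  by have := Ppos m mk; rewrite -HF !muln_gt0; case/andP => /andP[].
have HK := @Gform0 F k l n l0.
have HS := @Gform0 F k l (n + m) l0.
have Spos : (0 < #|Gs (k := k) (F := F) 0%VS l (n + m)|)%N.
  by have := Ppos (n + m) nmk; rewrite -HS !muln_gt0; case/andP => /andP[].
have KD : (#|Gs (k := k) (F := F) 0%VS l n| * D
    = #|Gs (k := k) (F := F) 0%VS l (n + m)| * 'C(n + m, n))%N.
  apply/eqP; rewrite -(eqn_pmul2r (_ : 0 < n`! * m`! * B ^ n * B ^ m)%N); last first.
    by rewrite !muln_gt0 !fact_gt0 !expn_gt0 Bpos.
  have -> : (#|Gs (k := k) (F := F) 0%VS l n| * D * (n`! * m`! * B ^ n * B ^ m)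
    = (#|Gs (k := k) (F := F) 0%VS l n| * n`! * B ^ n) * (D * m`! * B ^ m))%N by ring.
  have -> : (#|Gs (k := k) (F := F) 0%VS l (n + m)| * 'C(n + m, n) * (n`! * m`! * B ^ n * B ^ m)
    = #|Gs (k := k) (F := F) 0%VS l (n + m)| * ('C(n + m, n) * (n`! * (n + m - n)`!)) * B ^ (n + m))%N.
    by rewrite addKn expnD; ring.
  rewrite bin_fact ?leq_addr // HK HDc HS mulnDl big_split_ord /=.
  apply/eqP; congr (_ * _)%N; apply: eq_bigr => j _; by [].
split.
- by apply: cnt.
- by apply: cnt.
exists D; split.
- move=> A hA; rewrite /bip_deg /Z indepE (deg_eq m l0 hA).
  by apply/eqP; rewrite -(eqn_pmul2r cm) !mulnA HA // HDc.
- change (1 - (D%:R : rat) / (#|Gs (k := k) (F := F) 0%VS l m|)%:R = 1 - (#|F|%:R : rat) ^+ (m * n * l ^ 2)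
    * \prod_(i < m * l) (qbin1 #|F| (k - n * l - i) / qbin1 #|F| (k - i))).
  congr (1 - _).
  rewrite -(MN_eq q1 hk) -/P2 -HDc -HF !natrM.
  have f0 : forall x, (x`!)%:R != 0 :> rat by move=> x; rewrite pnatr_eq0 -lt0n fact_gt0.
  have b0 : (B ^ m)%:R != 0 :> rat by rewrite pnatr_eq0 -lt0n expn_gt0 Bpos.
  have F0 : (#|Gs (k := k) (F := F) 0%VS l m|)%:R != 0 :> rat by rewrite pnatr_eq0 -lt0n.
  by field; rewrite F0 f0 b0.
exists [set CZ n Z' | Z' in Gs (k := k) (F := F) 0%VS l (n + m)].
rewrite card_P; split.
- by rewrite /Z indepE; exact: cover_part.
- by rewrite E; apply: cnt => //; rewrite addn_gt0 n0.
- by move=> C /imsetP[Z' hZ' ->]; rewrite CZ_card; case/GsP: hZ' => -> _ _.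
change ((#|Gs (k:=k) (F:=F) 0%VS l n|)%:R * (1 - (1 - (D%:R : rat) / (#|Gs (k:=k) (F:=F) 0%VS l m|)%:R))
  / ((#|Gs (k:=k) (F:=F) 0%VS l (n + m)|)%:R / (#|Gs (k:=k) (F:=F) 0%VS l m|)%:R) = ('C(n + m, n))%:R).
rewrite subKr.
have S0 : (#|Gs (k := k) (F := F) 0%VS l (n + m)|)%:R != 0 :> rat by rewrite pnatr_eq0 -lt0n.
have F0 : (#|Gs (k := k) (F := F) 0%VS l m|)%:R != 0 :> rat by rewrite pnatr_eq0 -lt0n.
rewrite (_ : _ * _ / _ = (#|Gs (k := k) (F := F) 0%VS l n| * D)%:R / (#|Gs (k := k) (F := F) 0%VS l (n + m)|)%:R).
  by rewrite KD natrM mulrAC divff ?mul1r.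
by rewrite natrM; field; rewrite S0 F0.
Qed.
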